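(* Let $n>m\ge1$, $T\ge1$, $0<\gamma<1$, $x_0,\dots,x_T\in\mathbb{R}^m$, let $\sigma:\mathbb{R}\to[-1,1]$ be continuously differentiable (applied componentwise), and let $H\in\mathbb{R}^{m\times n}$ be the projection onto the first $m$ coordinates. Fix a policy $\pi_i=(F_i,G_i)$ and let $\Delta\pi=-\nabla_\pi J'_{\pi_i}(\pi)\big|_{\pi=\pi_i}$, where $J'_{\pi_i}(\pi)=c(\mathbf{U}_{\pi_i})+\gamma J^{\pi_i}(S_\pi\mathbf{U}_{\pi_i})$. If $\Delta\pi\neq 0$, then there exists $\alpha_0>0$ such that for all $0<\alpha\le\alpha_0$, $$J^{\pi_i+\alpha\Delta\pi}(\mathbf{U}_{\pi_i})<J^{\pi_i}(\mathbf{U}_{\pi_i}).$$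
   Context: A policy is a pair $\pi=(F,G)$ with $F\in\mathbb{R}^{n\times n}$, $G\in\mathbb{R}^{n\times(m+1)}$, identified with a vector in $\mathbb{R}^{n(n+m+1)}$ (so sums, scalar multiples and gradients with respect to $\pi$ are taken componentwise). A state is a sequence $\mathbf{U}=(u_0,u_1,\dots,u_T)$ with $u_t\in\mathbb{R}^n$. For $x\in\mathbb{R}^m$, $[x;1]\in\mathbb{R}^{m+1}$ is $x$ with a $1$ appended. Define $S_\pi\mathbf{U}=(u'_0,\dots,u'_T)$ by $u'_0=0$ and $u'_{t+1}=\sigma(Fu_t+G[x_t;1])$ for $0\le t<T$. Let $\mathbf{U}_\pi=(u_0,\dots,u_T)$ be the network trajectory $u_0=0$, $u_{t+1}=\sigma(Fu_t+G[x_t;1])$ for $0\le t<T$. The immediate cost is $c(\mathbf{U})=\sum_{t=1}^T\|Hu_t-x_t\|^2$ (Euclidean norm), and the discounted cost of state $\mathbf{U}$ under policy $\pi$ is $J^\pi(\mathbf{U})=\sum_{k=0}^\infty\gamma^k c(S_\pi^k\mathbf{U})$. *)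

(* Defs.v *)
From HB Require Import structures.
From mathcomp Require Import all_boot all_order all_algebra.
From mathcomp Require Import all_classical all_reals all_analysis.
Set Implicit Arguments. Unset Strict Implicit. Unset Printing Implicit Defensive.
Import Order.TTheory GRing.Theory Num.Theory.
Import numFieldNormedType.Exports.
Local Open Scope ring_scope.

Section RNN.
Variables (R : realType) (n m T : nat).
Variable sigma : R -> R.
Variable gamma : R.
Variable x : 'I_T.+1 -> 'cV[R]_m.

Definition policy := ('M[R]_n * 'M[R]_(n, m + 1))%type.

Definition state := 'I_T.+1 -> 'cV[R]_n.

Definition ext1 (v : 'cV[R]_m) : 'cV[R]_(m + 1) := col_mx v (const_mx 1).

Definition step (pi : policy) (u : 'cV[R]_n) (t : 'I_T.+1) : 'cV[R]_n :=
  map_mx sigma (pi.1 *m u + pi.2 *m ext1 (x t)).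

Definition S (pi : policy) (U : state) : state :=
  fun t => match val t with
           | 0 => 0
           | k.+1 => step pi (U (inord k)) (inord k)
           end.

Fixpoint traj (pi : policy) (k : nat) : 'cV[R]_n :=
  match k with
  | 0 => 0
  | k'.+1 => step pi (traj pi k') (inord k')
  end.

Definition Utraj (pi : policy) : state := fun t => traj pi (val t).

Definition H : 'M[R]_(m, n) := \matrix_(i < m, j < n) ((i : nat) == j)%:R.

Definition sqnorm k (v : 'cV[R]_k) : R := \sum_(i < k) (v i 0) ^+ 2.

Definition cost (U : state) : R :=
  \sum_(t < T.+1 | t != ord0) sqnorm (H *m U t - x t).

Definition J (pi : policy) (U : state) : R :=
  limn (fun N => \sum_(0 <= k < N) (gamma ^+ k * cost (iter k (S pi) U))).

Definition Jprime (pii : policy) (pi : policy) : R :=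
  cost (Utraj pii) + gamma * J pii (S pi (Utraj pii)).

Definition pderiv (f : policy -> R) (p v : policy) : R :=
  derive1 (fun h : R => f (p + h *: v)) 0.

Definition grad (f : policy -> R) (p : policy) : policy :=
  (\matrix_(i < n, j < n) pderiv f p (delta_mx i j, 0),
   \matrix_(i < n, j < m + 1) pderiv f p (0, delta_mx i j)).

Definition Dpi (pii : policy) : policy := - grad (Jprime pii) pii.

End RNN.

(* Main.v *)
Require Import Defs.
From HB Require Import structures.
From mathcomp Require Import all_boot all_order all_algebra.
From mathcomp Require Import all_classical all_reals all_analysis.
From mathcomp Require Import ring lra.
Import Order.TTheory GRing.Theory Num.Theory.
Import numFieldNormedType.Exports.
Local Open Scope ring_scope.
Section Gen.
Context {R : realType} {V : normedModType R}.

Lemma diff_fst {U W : normedModType R} (x : U * W) : differentiable (@fst U W) x.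
Proof.
have @f : {linear (U * W)%type -> U}.
  by exists (@fst U W); do 2![eexists]; do ?[constructor] => //.
rewrite (_ : fst = f) //; apply/linear_differentiable => y.
exact: cvg_fst.
Qed.

Lemma diff_snd {U W : normedModType R} (x : U * W) : differentiable (@snd U W) x.
Proof.
have @f : {linear (U * W)%type -> W}.
  by exists (@snd U W); do 2![eexists]; do ?[constructor] => //.
rewrite (_ : snd = f) //; apply/linear_differentiable => y.
exact: cvg_snd.
Qed.

Lemma diff_addf (f g : V -> R) v : differentiable f v -> differentiable g v ->
  differentiable (fun w => f w + g w) v.
Proof. move=> df dg; exact: (differentiableD df dg). Qed.

Lemma diff_mulf (f g : V -> R) v : differentiable f v -> differentiable g v ->
  differentiable (fun w => f w * g w) v.
Proof. move=> df dg; exact: (differentiableM df dg). Qed.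

Lemma diff_cstf (c : R) v : differentiable (fun _ : V => c) v.
Proof. exact: differentiable_cst. Qed.

Lemma diff_big (I : Type) (r : seq I) (P : pred I) (F : I -> V -> R) v :
  (forall i, differentiable (F i) v) ->
  differentiable (fun w => \sum_(i <- r | P i) F i w) v.
Proof.
move=> dF; elim: r => [|a r IH].
  rewrite (_ : (fun w => _) = (fun _ => 0)); first exact: diff_cstf.
  by apply/funext => w; rewrite big_nil.
rewrite (_ : (fun w => _) = (fun w => (if P a then F a w else 0) + \sum_(i <- r | P i) F i w)).
  by apply: diff_addf => //; case: (P a) => //; exact: diff_cstf.
apply/funext => w; rewrite big_cons; case: (P a) => //; by rewrite add0r.
Qed.

Lemma diff_compf (s : R -> R) (f : V -> R) v : (forall r, differentiable s r) ->
  differentiable f v -> differentiable (fun w => s (f w)) v.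
Proof. move=> ds df; exact: (differentiable_comp df (ds _)). Qed.


Definition Dm (a b : nat) (f : V -> 'M[R]_(a, b)) := forall i j v, differentiable (fun w => f w i j) v.
Arguments Dm {a b}.

Lemma Dm_cst (a b : nat) (A : 'M[R]_(a, b)) : Dm (fun _ => A).
Proof. move=> i j v; exact: diff_cstf. Qed.

Lemma Dm_add (a b : nat) (f g : V -> 'M[R]_(a, b)) : Dm f -> Dm g -> Dm (fun w => f w + g w).
Proof.
move=> df dg i j v; rewrite (_ : (fun w => _) = (fun w => f w i j + g w i j)).
  exact: diff_addf.
by apply/funext => w; rewrite mxE.
Qed.

Lemma Dm_sub (a b : nat) (f g : V -> 'M[R]_(a, b)) : Dm f -> Dm g -> Dm (fun w => f w - g w).
Proof.
move=> df dg i j v; rewrite (_ : (fun w => _) = (fun w => f w i j + (-1) * g w i j)).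
  by apply: diff_addf => //; apply: diff_mulf => //; exact: diff_cstf.
by apply/funext => w; rewrite !mxE mulN1r.
Qed.

Lemma Dm_mul (a b c : nat) (f : V -> 'M[R]_(a, b)) (g : V -> 'M[R]_(b, c)) :
  Dm f -> Dm g -> Dm (fun w => f w *m g w).
Proof.
move=> df dg i j v; rewrite (_ : (fun w => _) = (fun w => \sum_(k < b) f w i k * g w k j)).
  by apply: diff_big => k; apply: diff_mulf.
by apply/funext => w; rewrite mxE.
Qed.

Lemma Dm_map (s : R -> R) (a b : nat) (f : V -> 'M[R]_(a, b)) : (forall r, differentiable s r) ->
  Dm f -> Dm (fun w => map_mx s (f w)).
Proof.
move=> ds df i j v; rewrite (_ : (fun w => _) = (fun w => s (f w i j))).
  exact: diff_compf.
by apply/funext => w; rewrite mxE.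
Qed.

End Gen.
Arguments Dm {R V a b}.
Section RNNd.
Context {R : realType} {n m T : nat} (sigma : R -> R) (gamma : R)
  (x : 'I_T.+1 -> 'cV[R]_m) {V : normedModType R}.

Definition DU (Us : V -> state R n T) := forall t, Dm (fun w => Us w t).

Lemma Dm_step (ds : forall r, differentiable sigma r) (P1 : V -> 'M[R]_n) (P2 : V -> 'M[R]_(n, m + 1))
  (u : V -> 'cV[R]_n) t : Dm P1 -> Dm P2 -> Dm u ->
  Dm (fun w => step sigma x (P1 w, P2 w) (u w) t).
Proof.
move=> d1 d2 du; rewrite /step /=; apply: Dm_map => //.
by apply: Dm_add; apply: Dm_mul => //; exact: Dm_cst.
Qed.

Lemma DU_S (ds : forall r, differentiable sigma r) (P1 : V -> 'M[R]_n) (P2 : V -> 'M[R]_(n, m + 1))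
  (Us : V -> state R n T) : Dm P1 -> Dm P2 -> DU Us ->
  DU (fun w => S sigma x (P1 w, P2 w) (Us w)).
Proof.
move=> d1 d2 dU t; rewrite /S; case: (val t) => [|k].
  exact: Dm_cst.
exact: Dm_step.
Qed.

Lemma DU_iter (ds : forall r, differentiable sigma r) (P1 : V -> 'M[R]_n) (P2 : V -> 'M[R]_(n, m + 1))
  (Us : V -> state R n T) k : Dm P1 -> Dm P2 -> DU Us ->
  DU (fun w => iter k (S sigma x (P1 w, P2 w)) (Us w)).
Proof.
move=> d1 d2 dU; elim: k => [|k IH] //.
rewrite (_ : (fun w => _) = (fun w => S sigma x (P1 w, P2 w) (iter k (S sigma x (P1 w, P2 w)) (Us w)))) //.
exact: DU_S.
Qed.

Lemma Dm_traj (ds : forall r, differentiable sigma r) (P1 : V -> 'M[R]_n) (P2 : V -> 'M[R]_(n, m + 1))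
  k : Dm P1 -> Dm P2 -> Dm (fun w => traj sigma x (P1 w, P2 w) k).
Proof.
move=> d1 d2; elim: k => [|k IH] /=; first exact: Dm_cst.
exact: Dm_step.
Qed.

Lemma DU_Utraj (ds : forall r, differentiable sigma r) (P1 : V -> 'M[R]_n) (P2 : V -> 'M[R]_(n, m + 1)) :
  Dm P1 -> Dm P2 -> DU (fun w => Utraj sigma x (P1 w, P2 w)).
Proof. move=> d1 d2 t; exact: Dm_traj. Qed.

Lemma Ds_cost (Us : V -> state R n T) : DU Us -> forall v, differentiable (fun w => cost x (Us w)) v.
Proof.
move=> dU v; rewrite /cost; apply: diff_big => t; rewrite /sqnorm.
apply: diff_big => i; rewrite (_ : (fun w => _) = (fun w => (H R n m *m Us w t - x t) i 0 * (H R n m *m Us w t - x t) i 0)).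
  have d : Dm (fun w => H R n m *m Us w t - x t).
    by apply: Dm_sub; [apply: Dm_mul => //; exact: Dm_cst | exact: Dm_cst].
  by apply: diff_mulf; apply: d.
by apply/funext => w; rewrite expr2.
Qed.

Definition Jc (q : policy R n m) (U : state R n T) : R :=
  \sum_(k < T.+1) gamma ^+ k * cost x (iter k (S sigma x q) U)
  + gamma ^+ T.+1 / (1 - gamma) * cost x (Utraj sigma x q).

Lemma Ds_Jc (ds : forall r, differentiable sigma r) (P1 : V -> 'M[R]_n) (P2 : V -> 'M[R]_(n, m + 1))
  (Us : V -> state R n T) : Dm P1 -> Dm P2 -> DU Us ->
  forall v, differentiable (fun w => Jc (P1 w, P2 w) (Us w)) v.
Proof.
move=> d1 d2 dU v; rewrite /Jc; apply: diff_addf.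
  apply: diff_big => k; apply: diff_mulf; first exact: diff_cstf.
  by apply: Ds_cost; apply: DU_iter.
apply: diff_mulf; first exact: diff_cstf.
by apply: Ds_cost; apply: DU_Utraj.
Qed.

End RNNd.
Section RNNj.
Context {R : realType} {n m T : nat} (sigma : R -> R) (gamma : R)
  (x : 'I_T.+1 -> 'cV[R]_m).

Lemma iter_traj (q : policy R n m) (U : state R n T) k (t : 'I_T.+1) :
  (val t <= k)%N -> iter k.+1 (S sigma x q) U t = traj sigma x q (val t).
Proof.
elim: k t => [|k IH] [[|j] jT] htk //.
rewrite iterS.
have jT' : (j < T.+1)%N by apply: ltnW.
transitivity (step sigma x q (iter k.+1 (S sigma x q) U (inord j)) (inord j)); first by [].
by rewrite IH /= inordK...
Qed.

Lemma iter_fix (q : policy R n m) (U : state R n T) k :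
  (T < k)%N -> iter k (S sigma x q) U = Utraj sigma x q.
Proof.
case: k => [//|k] hk; apply/funext => t; rewrite iter_traj //.
by rewrite -ltnS (leq_trans (ltn_ord t)).
Qed.

Lemma S_fix (q : policy R n m) : S sigma x q (Utraj sigma x q) = Utraj sigma x q.
Proof.
rewrite -{1}(@iter_fix q (Utraj sigma x q) T.+1) // -iterS iter_fix //.
Qed.

Lemma J_Jc (q : policy R n m) (U : state R n T) : 0 <= gamma < 1 ->
  J sigma gamma x q U = Jc sigma gamma x q U.
Proof.
move=> /andP[g0 g1]; rewrite /J; apply: cvg_lim => //.
rewrite -(cvg_shiftn T.+1) /=.
set c := cost x (Utraj sigma x q).
set A := \sum_(k < T.+1) gamma ^+ k * cost x (iter k (S sigma x q) U).
have E : forall N, \sum_(0 <= k < N + T.+1) gamma ^+ k * cost x (iter k (S sigma x q) U)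
   = A + series (geometric (gamma ^+ T.+1) gamma) N * c.
  move=> N; rewrite (big_cat_nat _ (n:=T.+1)) //=; last by rewrite leq_addl.
  rewrite big_mkord; congr (_ + _).
  rewrite -geometric_partial_tail big_distrl /= addnC.
  apply: eq_big_nat => k /andP[hk _]; rewrite iter_fix //.
rewrite (_ : (fun _ => _) = (fun N => A + series (geometric (gamma ^+ T.+1) gamma) N * c)); last first.
  by apply/funext => N; rewrite E.
rewrite /Jc -/A -/c; apply: cvgD; first exact: cvg_cst.
apply: cvgMr_tmp; apply: cvg_geometric_series.
by rewrite ger0_norm.
Qed.

Lemma Jc_step (q : policy R n m) (U : state R n T) : gamma != 1 ->
  Jc sigma gamma x q U = cost x U + gamma * Jc sigma gamma x q (S sigma x q U).
Proof.
move=> g1; rewrite /Jc.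
set c := cost x (Utraj sigma x q).
have E1 : \sum_(k < T.+1) gamma ^+ k * cost x (iter k (S sigma x q) U) =
   cost x U + \sum_(i < T) gamma ^+ i.+1 * cost x (iter i.+1 (S sigma x q) U).
  by rewrite big_ord_recl expr0 mul1r.
have E2 : \sum_(k < T.+1) gamma ^+ k * cost x (iter k (S sigma x q) (S sigma x q U)) =
   \sum_(i < T) gamma ^+ i * cost x (iter i.+1 (S sigma x q) U) + gamma ^+ T * c.
  rewrite big_ord_recr; congr (_ + _).
    by apply: eq_bigr => i _; rewrite -iterSr.
  by rewrite -iterSr (@iter_fix q U T.+1).
have E3 : \sum_(i < T) gamma ^+ i.+1 * cost x (iter i.+1 (S sigma x q) U) =
   gamma * \sum_(i < T) gamma ^+ i * cost x (iter i.+1 (S sigma x q) U).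
  by rewrite mulr_sumr; apply: eq_bigr => i _; rewrite exprS mulrA.
rewrite E1 E2 E3.
have g1' : 1 - gamma != 0 by rewrite subr_eq0 eq_sym.
rewrite !exprS; field => //.
Qed.

End RNNj.
Section Anal.
Context {R : realType}.
Local Open Scope classical_set_scope.

Lemma Dshift {V1 V2 : normedModType R} (f : V1 -> R) (g : V2 -> R) a v b w c k :
  (forall h : R, f (h *: v + a) = c + k * g (h *: w + b)) -> derivable g b w ->
  'D_v f a = k * 'D_w g b.
Proof.
move=> E dg.
have Ea : f a = c + k * g b by have := E 0; rewrite !scale0r !add0r.
rewrite /derive.
rewrite (_ : (fun h => h^-1 *: ((f \o shift a) (h *: v) - f a)) =
   k *: (fun h => h^-1 *: ((g \o shift b) (h *: w) - g b))).
  by rewrite limZl_tmp.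
apply/funext => h /=; rewrite /shift E Ea.
transitivity (k * (h^-1 * (g (h *: w + b) - g b))); last by [].
rewrite -[LHS]/(h^-1 * (c + k * g (h *: w + b) - (c + k * g b))); ring.
Qed.

Lemma neg_deriv {V : normedModType R} (f : V -> R) a v :
  derivable f a v -> 'D_v f a < 0 ->
  exists d : R, 0 < d /\ forall h : R, 0 < h <= d -> f (h *: v + a) < f a.
Proof.
move=> df Dneg.
have := @cvgr_lt R R (0:R)^' _ _ _ df _ Dneg.
move=> /(_ _) /nbhs_ballP [e /= e0 He].
exists (e / 2); split; first by rewrite divr_gt0.
move=> h /andP[h0 he].
have hb : ball (0:R) e h.
  rewrite /ball /= sub0r normrN gtr0_norm //.
  by apply: (le_lt_trans he); rewrite ltr_pdivrMr // ltr_pMr // ltr1n.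
have := He h hb (lt0r_neq0 h0).
rewrite /= /shift.
rewrite -[X in X < _ -> _]/(h^-1 * (f (h *: v + a) - f a)).
rewrite pmulr_rlt0 ?invr_gt0 // subr_lt0 //.
Qed.

Lemma fst_sum {U W : zmodType} (I : Type) (r : seq I) (P : pred I) (F : I -> (U * W)%type) :
  (\sum_(i <- r | P i) F i).1 = \sum_(i <- r | P i) (F i).1.
Proof. by apply: (big_morph fst) => //. Qed.

Lemma snd_sum {U W : zmodType} (I : Type) (r : seq I) (P : pred I) (F : I -> (U * W)%type) :
  (\sum_(i <- r | P i) F i).2 = \sum_(i <- r | P i) (F i).2.
Proof. by apply: (big_morph snd) => //. Qed.

Lemma sumsq_ge0 (a b : nat) (M : 'M[R]_(a, b)) : 0 <= \sum_i \sum_j M i j ^+ 2.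
Proof. by apply: sumr_ge0 => i _; apply: sumr_ge0 => j _; exact: sqr_ge0. Qed.

Lemma sumsq_gt0 (a b : nat) (M : 'M[R]_(a, b)) : M != 0 -> 0 < \sum_i \sum_j M i j ^+ 2.
Proof.
move=> HM.
have /existsP[i /existsP[j Hij]] : [exists i, exists j, M i j != 0].
  apply: contraNT HM => /existsPn H; apply/eqP/matrixP => i j; rewrite mxE.
  by move: (H i) => /existsPn /(_ j); rewrite negbK => /eqP.
rewrite (bigD1 i) //= (bigD1 j) //=.
have h1 : 0 < M i j ^+ 2 by rewrite lt_def sqr_ge0 andbT sqrf_eq0.
have h2 : 0 <= \sum_(k | k != j) M i k ^+ 2 by apply: sumr_ge0 => k _; exact: sqr_ge0.
have h3 : 0 <= \sum_(k | k != i) \sum_j M k j ^+ 2.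
  by apply: sumr_ge0 => k _; apply: sumr_ge0 => l _; exact: sqr_ge0.
lra.
Qed.

Lemma pderivE {n m : nat} (f : policy R n m -> R) p v : differentiable f p ->
  pderiv f p v = 'd f p v.
Proof.
move=> df; rewrite /pderiv derive1E.
rewrite (@Dshift _ _ (fun h : R => f (p + h *: v)) f 0 1 p v 0 1); first by rewrite mul1r deriveE.
  by move=> h; rewrite addr0 add0r mul1r addrC -[h *: 1]/(h * 1) mulr1.
exact: diff_derivable.
Qed.

Lemma grad_neg {n m : nat} (f : policy R n m -> R) p : differentiable f p ->
  - grad f p != 0 -> 'd f p (- grad f p) < 0.
Proof.
move=> df.
set L := 'd f p.
have dec : forall v : policy R n m, L v =
   \sum_i \sum_j v.1 i j * L (delta_mx i j, 0) + \sum_i \sum_j v.2 i j * L (0, delta_mx i j).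
  move=> [A B].
  have E : (A, B) = \sum_i \sum_j A i j *: ((delta_mx i j, 0) : policy R n m)
      + \sum_i \sum_j B i j *: ((0, delta_mx i j) : policy R n m).
    rewrite [RHS]surjective_pairing; congr (_, _) => /=.
      rewrite !fst_sum [in X in _ = _ + X]big1 ?addr0; last first.
        by move=> i _; rewrite fst_sum big1 // => j _; rewrite /= scaler0.
      rewrite {1}(matrix_sum_delta A); apply: eq_bigr => i _; rewrite fst_sum //.
    rewrite !snd_sum [in X in _ = X + _]big1 ?add0r; last first.
      by move=> i _; rewrite snd_sum big1 // => j _; rewrite /= scaler0.
    rewrite {1}(matrix_sum_delta B); apply: eq_bigr => i _; rewrite snd_sum //.
  rewrite {1}E linearD !linear_sum /=; congr (_ + _); apply: eq_bigr => i _;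
    rewrite linear_sum; apply: eq_bigr => j _; rewrite linearZ //.
move=> HD; rewrite dec.
set G := grad f p.
have e1 : forall i j, L (delta_mx i j, 0) = G.1 i j.
  by move=> i j; rewrite /G /grad /= mxE pderivE.
have e2 : forall i j, L (0, delta_mx i j) = G.2 i j.
  by move=> i j; rewrite /G /grad /= mxE pderivE.
have s1 : \sum_i \sum_j (- G).1 i j * L (delta_mx i j, 0) = - \sum_i \sum_j G.1 i j ^+ 2.
  rewrite -sumrN; apply: eq_bigr => i _; rewrite -sumrN; apply: eq_bigr => j _.
  by rewrite e1 /= !mxE mulNr expr2.
have s2 : \sum_i \sum_j (- G).2 i j * L (0, delta_mx i j) = - \sum_i \sum_j G.2 i j ^+ 2.
  rewrite -sumrN; apply: eq_bigr => i _; rewrite -sumrN; apply: eq_bigr => j _.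
  by rewrite e2 /= !mxE mulNr expr2.
rewrite s1 s2.
have g1 := @sumsq_ge0 _ _ G.1; have g2 := @sumsq_ge0 _ _ G.2.
case: (eqVneq G.1 0) => [H1|H1]; last by have := @sumsq_gt0 _ _ _ H1; lra.
case: (eqVneq G.2 0) => [H2|H2]; last by have := @sumsq_gt0 _ _ _ H2; lra.
 
have G0 : G = 0 by rewrite [G]surjective_pairing H1 H2.
by move: HD; rewrite -/G G0 oppr0 eqxx.
Qed.


End Anal.
Section Fin.
Context {R : realType}.

Lemma Dm_compf {V W : normedModType R} (a b : nat) (f : W -> 'M[R]_(a, b)) (g : V -> W) :
  Dm f -> (forall v, differentiable g v) -> Dm (fun v => f (g v)).
Proof. move=> df dg i j v; exact: (differentiable_comp (dg v) (df i j (g v))). Qed.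

Lemma Dm_fst {W : normedModType R} (a b : nat) : Dm (fun w : ('M[R]_(a, b) * W)%type => w.1).
Proof. move=> i j v; exact: (differentiable_comp (diff_fst v) (differentiable_coord _ i j)). Qed.

Lemma Dm_snd {W : normedModType R} (a b : nat) : Dm (fun w : (W * 'M[R]_(a, b))%type => w.2).
Proof. move=> i j v; exact: (differentiable_comp (diff_snd v) (differentiable_coord _ i j)). Qed.

End Fin.

Theorem lemma2 (R : realType) (n m T : nat) (gamma : R)
  (x : 'I_T.+1 -> 'cV[R]_m) (sigma : R -> R) (Fi : 'M[R]_n) (Gi : 'M[R]_(n, m + 1)) :
  (m < n)%N -> (1 <= m)%N -> (1 <= T)%N -> 0 < gamma < 1 ->
  (forall r : R, -1 <= sigma r <= 1) ->
  (forall r : R, derivable sigma r 1) -> continuous (derive1 sigma) ->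
  Dpi sigma gamma x (Fi, Gi) != 0 ->
  exists alpha0 : R, 0 < alpha0 /\
    forall alpha : R, 0 < alpha <= alpha0 ->
      J sigma gamma x ((Fi, Gi) + alpha *: Dpi sigma gamma x (Fi, Gi)) (Utraj sigma x (Fi, Gi))
      < J sigma gamma x (Fi, Gi) (Utraj sigma x (Fi, Gi)).
Proof.
move=> _ _ _ /andP[g0 g1] _ dsig _ HD.
have ds : forall r, differentiable sigma r.
  by move=> r; apply/derivable1_diffP; exact: dsig.
have g01 : 0 <= gamma < 1 by rewrite (ltW g0) g1.
have gn1 : gamma != 1 by rewrite lt_eqF.
set p0 : policy R n m := (Fi, Gi).
set U0 := Utraj sigma x p0.
set D := Dpi sigma gamma x p0.
have Jstep : forall (q : policy R n m) (U : state R n T), J sigma gamma x q U = cost x U + gamma * J sigma gamma x q (S sigma x q U).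
  by move=> q U; rewrite !J_Jc // Jc_step.
have SU0 : S sigma x p0 U0 = U0 by exact: S_fix.
pose G := fun q : policy R n m => J sigma gamma x q U0.
pose Psi := fun w : (policy R n m * policy R n m)%type => J sigma gamma x w.1 (S sigma x w.2 U0).
pose JP := Jprime sigma gamma x p0.
have dG : forall q, differentiable G q.
  rewrite (_ : G = fun w => Jc sigma gamma x (w.1, w.2) ((fun _ => U0) w)).
    apply: Ds_Jc => //; [exact: Dm_fst | exact: Dm_snd | move=> t; exact: Dm_cst].
  by apply/funext => -[a b]; rewrite /G J_Jc.
have dPsi : forall w, differentiable Psi w.
  rewrite (_ : Psi = fun w => Jc sigma gamma x (w.1.1, w.1.2) (S sigma x (w.2.1, w.2.2) U0)).
    apply: Ds_Jc => //.
    - by apply: Dm_compf; [exact: Dm_fst | exact: diff_fst].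
    - by apply: Dm_compf; [exact: Dm_snd | exact: diff_fst].
    - apply: DU_S => //; last by move=> t; exact: Dm_cst.
      + by apply: Dm_compf; [exact: Dm_fst | exact: diff_snd].
      + by apply: Dm_compf; [exact: Dm_snd | exact: diff_snd].
  by apply/funext => -[[a b] [c d]]; rewrite /Psi J_Jc.
have dJP : forall q, differentiable JP q.
  rewrite (_ : JP = fun w => cost x U0 + gamma * Jc sigma gamma x ((fun _ => Fi) w, (fun _ => Gi) w) (S sigma x (w.1, w.2) U0)).
    move=> q; apply: diff_addf; first exact: diff_cstf.
    apply: diff_mulf; first exact: diff_cstf.
    apply: Ds_Jc => //; try exact: Dm_cst.
    apply: DU_S => //; [exact: Dm_fst | exact: Dm_snd | move=> t; exact: Dm_cst].
  by apply/funext => -[a b]; rewrite /JP /Jprime J_Jc.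
set e : (policy R n m * policy R n m)%type := (p0, p0).
have E1 : 'D_D G p0 = gamma * 'D_((D, D) : (policy R n m * policy R n m)%type) Psi e.
  apply: (@Dshift _ _ _ G Psi p0 D e (D, D) (cost x U0) gamma); last exact: diff_derivable.
  move=> h; rewrite /G /Psi /= Jstep //.
have E2 : 'D_((D, 0) : (policy R n m * policy R n m)%type) Psi e = 1 * 'D_D G p0.
  apply: (@Dshift _ _ _ Psi G e (D, 0) p0 D 0 1); last exact: diff_derivable.
  by move=> h; rewrite /G /Psi /= scaler0 add0r SU0 add0r mul1r.
have E3 : 'D_D JP p0 = gamma * 'D_((0, D) : (policy R n m * policy R n m)%type) Psi e.
  apply: (@Dshift _ _ _ JP Psi p0 D e (0, D) (cost x U0) gamma); last exact: diff_derivable.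
  by move=> h; rewrite /JP /Psi /Jprime /= scaler0 add0r.
have E4 : 'D_((D, D) : (policy R n m * policy R n m)%type) Psi e =
    'D_((D, 0) : (policy R n m * policy R n m)%type) Psi e +
    'D_((0, D) : (policy R n m * policy R n m)%type) Psi e.
  rewrite !deriveE // -linearD; congr ('d Psi e _).
  by rewrite [RHS]surjective_pairing /= addr0 add0r.
have E5 : 'D_D JP p0 < 0.
  by rewrite deriveE //; apply: grad_neg.
have Gneg : 'D_D G p0 < 0.
  move: E1 E2 E3 E4 E5; rewrite mul1r.
  set a := 'D_D G p0; set b := 'D_(_) Psi e; set c := 'D_(_) Psi e; set d := 'D_(_) Psi e.
  move=> E1 E2 E3 E4 E5; nra.
have [d [d0 Hd]] := @neg_deriv _ _ G p0 D (diff_derivable (dG p0)) Gneg.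
exists d; split => // alpha Ha.
by rewrite addrC; apply: Hd.
Qed.
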